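(* Let $n$ be even and let $G$ be a bipartite graph with parts $V_1=\{v^1_1,\dots,v^1_n\}$ and $V_2=\{v^2_1,\dots,v^2_n\}$, with maximum matching size $\alpha(G)$. Let $G'$ be the graph on vertex set $V_0\cup V_1\cup V_2\cup V_3\cup V_4$, where $V_0=\{v^0_1,\dots,v^0_{n/2}\}$, $V_3=\{v^3_1,\dots,v^3_n\}$, $V_4=\{v^4_1,\dots,v^4_{n/2}\}$ are new vertices, with edge set consisting of: $v^0_i v^1_{2i-1}$ and $v^0_i v^1_{2i}$ for all $i\in[n/2]$; all edges of $G$ between $V_1$ and $V_2$; $v^2_i v^3_i$ for all $i\in[n]$; and $v^3_i v^4_j$ for all $i\in[n]$, $j\in[n/2]$. Then (a) for every matching $M$ of $G$ there is a TSP tour of $G'$ of $(1,2)$-cost at most $5n-|M|$, and (b) every TSP tour of $G'$ has $(1,2)$-cost at least $5n-\alpha(G)$. Consequently the optimal $(1,2)$-TSP cost of $G'$ (which has $4n$ vertices) equals $5n-\alpha(G)$.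
   Context: For a graph $F=(V,E)$, the $(1,2)$-cost of a TSP tour (a cyclic ordering $(v_1,\dots,v_N)$ of $V$) is $\sum_{i=1}^N D(v_i,v_{i+1})$ with $v_{N+1}=v_1$, where $D(u,v)=1$ if $uv\in E$ and $D(u,v)=2$ otherwise; the optimal $(1,2)$-TSP cost is the minimum over tours. *)

(* Defs.v *)
From mathcomp Require Import all_boot.
Set Implicit Arguments. Unset Strict Implicit. Unset Printing Implicit Defensive.

Section TSP.
Variables (V : finType) (e : rel V).

Definition tsp_dist (u v : V) : nat := if e u v then 1 else 2.

(* a TSP tour: a cyclic ordering (v_1,...,v_N) of V, given as a sequence
   listing every vertex exactly once *)
Definition is_tour (s : seq V) : Prop := perm_eq s (enum V).

Definition tour_cost (s : seq V) : nat :=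
  match s with
  | [::] => 0
  | x :: t => sumn (pairmap tsp_dist x (rcons t x))
  end.

Definition is_opt_tsp_cost (c : nat) : Prop :=
  (exists2 s, is_tour s & tour_cost s = c) /\
  (forall s, is_tour s -> c <= tour_cost s).
End TSP.

(* E i j  <->  v^1_i v^2_j is an edge of G (0-indexed) *)
Definition is_bmatching n (E : 'I_n -> 'I_n -> bool) (M : {set 'I_n * 'I_n}) : bool :=
  [forall p in M, E p.1 p.2] &&
  [forall p in M, forall q in M, (p.1 == q.1) || (p.2 == q.2) ==> (p == q)].

Definition max_matching n (E : 'I_n -> 'I_n -> bool) : nat :=
  \max_(M : {set 'I_n * 'I_n} | is_bmatching E M) #|M|.

Definition Vp (n : nat) : finType :=
  ((('I_(n./2) + 'I_n) + 'I_n) + 'I_n + 'I_(n./2))%type.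

Definition vtx0 n (i : 'I_(n./2)) : Vp n := inl (inl (inl (inl i))).
Definition vtx1 n (i : 'I_n) : Vp n := inl (inl (inl (inr i))).
Definition vtx2 n (i : 'I_n) : Vp n := inl (inl (inr i)).
Definition vtx3 n (i : 'I_n) : Vp n := inl (inr i).
Definition vtx4 n (i : 'I_(n./2)) : Vp n := inr i.

(* oriented adjacency (lower part index -> higher part index); indices are
   0-based, so v^0_i ~ v^1_{2i-1}, v^1_{2i} becomes i ~ 2i, 2i+1 *)
Definition Gp_adj n (E : 'I_n -> 'I_n -> bool) (x y : Vp n) : bool :=
  match x, y with
  | inl (inl (inl (inl i))), inl (inl (inl (inr j))) =>
      (val j == (val i).*2) || (val j == (val i).*2.+1)
  | inl (inl (inl (inr i))), inl (inl (inr j)) => E i j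
  | inl (inl (inr i)), inl (inr j) => i == j
  | inl (inr _), inr _ => true
  | _, _ => false
  end.

Definition Gp_edge n (E : 'I_n -> 'I_n -> bool) : rel (Vp n) :=
  fun x y => Gp_adj E x y || Gp_adj E y x.

(* Main.v *)
Require Import Defs.
From mathcomp Require Import all_boot zify.
Set Implicit Arguments. Unset Strict Implicit. Unset Printing Implicit Defensive.


Lemma sum_shift1 (G : nat -> nat) N : (forall k, G (k + N) = G k) ->
  \sum_(0 <= k < N) G (k + 1) = \sum_(0 <= k < N) G k.
Proof.
move=> HG; case: N HG => [|N] HG; first by rewrite !big_geq.
rewrite big_nat_recr //= big_nat_recl //=.
have -> : G (N + 1) = G 0 by rewrite -(HG 0) add0n addn1.
rewrite addnC; congr (_ + _); apply: eq_big_nat => k _; by rewrite addn1.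
Qed.

Lemma sum_shift (G : nat -> nat) N c : (forall k, G (k + N) = G k) ->
  \sum_(0 <= k < N) G (k + c) = \sum_(0 <= k < N) G k.
Proof.
elim: c G => [|c IH] G HG; first by apply: eq_big_nat => k _; rewrite addn0.
rewrite -(IH G HG).
have H := @sum_shift1 (fun k => G (k + c)) N.
rewrite -H; last by move=> k; rewrite addnAC HG.
by apply: eq_big_nat => k _; congr G; lia.
Qed.

Lemma sum_blocks (G : nat -> nat) m :
  \sum_(0 <= k < 8 * m) G k = \sum_(0 <= i < m) \sum_(0 <= r < 8) G (8 * i + r).
Proof.
elim: m => [|m IH]; first by rewrite !big_geq.
rewrite [RHS]big_nat_recr //= -IH (@big_cat_nat _ _ _ (8 * m)) //=; last by lia.
congr (_ + _).
rewrite -{1}(add0n (8 * m)) big_addn.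
have -> : 8 * m.+1 - 8 * m = 8 by lia.
by apply: eq_big_nat => r _; rewrite addnC.
Qed.

Lemma sum_pairs (h : nat -> nat) m :
  \sum_(0 <= u < 2 * m) h u = \sum_(0 <= i < m) (h (2 * i) + h (2 * i + 1)).
Proof.
elim: m => [|m IH]; first by rewrite !big_geq.
rewrite [RHS]big_nat_recr //= -IH.
have -> : 2 * m.+1 = (2 * m).+1.+1 by lia.
rewrite big_nat_recr //= big_nat_recr //= addn1 addnA.
done.
Qed.


Lemma tour_cost_sum (V : finType) (e : rel V) (s : seq V) (d : V) :
  0 < size s ->
  tour_cost e s = \sum_(0 <= k < size s)
     tsp_dist e (nth d s (k %% size s)) (nth d s (k.+1 %% size s)).
Proof.
case: s => [//|a t] _.
rewrite /tour_cost sumnE (big_nth 0) size_pairmap size_rcons.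
apply: eq_big_nat => k /andP[_ hk].
rewrite (nth_pairmap a) ?size_rcons // nth_rcons /= modn_small //.
case: k hk => [|k] hk /=; first by case: t hk.
rewrite ltnS in hk; rewrite nth_rcons hk (set_nth_default d a hk).
case: (ltnP k.+1 (size t)) => h.
- by rewrite modn_small //= (set_nth_default d).
- have -> : k.+1 = size t by lia.
  by rewrite eqxx modnn /=.
Qed.

Lemma sum_perm (V : finType) (s : seq V) (d : V) (f : V -> nat) :
  perm_eq s (enum V) ->
  \sum_(0 <= k < size s) f (nth d s k) = \sum_(v : V) f v.
Proof.
move=> H; transitivity (\sum_(v <- s) f v); first by rewrite (big_nth d).
rewrite (perm_big _ H) big_enum /=.
by apply: eq_bigl.
Qed.


Section G.
Variables (n : nat) (E : 'I_n -> 'I_n -> bool).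
Local Notation V := (Vp n).
Local Notation e := (Gp_edge E).

Definition isV0 (v : V) := if v is inl (inl (inl (inl _))) then true else false.
Definition isV1 (v : V) := if v is inl (inl (inl (inr _))) then true else false.
Definition isV2 (v : V) := if v is inl (inl (inr _)) then true else false.
Definition isV3 (v : V) := if v is inl (inr _) then true else false.
Definition isV4 (v : V) := if v is inr _ then true else false.

Definition c01 a b := e a b && (isV0 a || isV0 b).
Definition c12 a b := e a b && ((isV1 a && isV2 b) || (isV2 a && isV1 b)).
Definition c23 a b := e a b && ((isV2 a && isV3 b) || (isV3 a && isV2 b)).
Definition c34 a b := e a b && (isV4 a || isV4 b).

Ltac vcase v := case: v => [[[[?|?]|?]|?]|?].

Lemma edge_decomp a b : (e a b : nat) = c01 a b + c12 a b + c23 a b + c34 a b.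
Proof.
rewrite /c01 /c12 /c23 /c34 /Gp_edge.
vcase a; vcase b => /=; rewrite ?andbT ?andbF ?orbF ?addn0 ?add0n //.
Qed.

Lemma c01_split a b : (c01 a b : nat) = (isV1 a && c01 a b) + (isV1 b && c01 a b).
Proof. rewrite /c01 /Gp_edge. vcase a; vcase b => /=; rewrite ?andbT ?andbF ?orbF ?addn0 ?add0n //. Qed.
Lemma c23_split a b : (c23 a b : nat) = (isV2 a && c23 a b) + (isV2 b && c23 a b).
Proof. rewrite /c23 /Gp_edge. vcase a; vcase b => /=; rewrite ?andbT ?andbF ?orbF ?addn0 ?add0n //. Qed.
Lemma c34_split a b : (c34 a b : nat) = (isV4 a && c34 a b) + (isV4 b && c34 a b).
Proof. rewrite /c34 /Gp_edge. vcase a; vcase b => /=; rewrite ?andbT ?andbF ?orbF ?addn0 ?add0n //. Qed.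

Definition Lloc p v q : nat :=
  (isV1 v && c01 v q) + (isV1 v && c01 p v) + (isV2 v && c23 v q) + (isV2 v && c23 p v)
  + (isV4 v && c34 v q) + (isV4 v && c34 p v) + (c12 p v && c12 v q).

Lemma Lloc_le p v q : p <> q ->
  Lloc p v q <= isV1 v + isV2 v + 2 * isV4 v.
Proof.
rewrite /Lloc /c01 /c12 /c23 /c34 /Gp_edge.
vcase v; vcase p; vcase q => /= hpq; rewrite ?andbT ?andbF ?orbF ?addn0 ?add0n ?andbb //.
all: try by case: (_ || _).
all: try exact: leq_b1.
- case/boolP: (_ || _) => h1; case/boolP: (_ || _) => h2 //=.
  exfalso; apply: hpq; do 4 congr inl; apply: val_inj; move: h1 h2 => /=; lia.
- case: eqP => [h1|] //; case: eqP => [h2|] //.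
  by exfalso; apply: hpq; rewrite -h1 -h2.
Qed.

Definition pairOf (a b : V) : option ('I_n * 'I_n) :=
  match a, b with
  | inl (inl (inl (inr u))), inl (inl (inr w)) => Some (u, w)
  | inl (inl (inr w)), inl (inl (inl (inr u))) => Some (u, w)
  | _, _ => None
  end.

Lemma pairOf_spec a b : c12 a b -> exists u w, pairOf a b = Some (u, w) /\ E u w /\
  ((a = vtx1 u /\ b = vtx2 w) \/ (a = vtx2 w /\ b = vtx1 u)).
Proof.
rewrite /c12 /Gp_edge; vcase a; vcase b => //=; rewrite ?andbT ?andbF ?orbF //.
- move=> h; eexists; eexists; split; first reflexivity.
  by split; [exact h | left].
- move=> h; eexists; eexists; split; first reflexivity.
  by split; [exact h | right].
Qed.

Lemma succ_mod_inj a b N : a < N -> b < N -> a.+1 %% N = b.+1 %% N -> a = b.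
Proof.
move=> ha hb /eqP; rewrite -[a.+1]addn1 -[b.+1]addn1 eqn_modDr !modn_small // => /eqP //.
Qed.
Lemma prev_next_neq k N : 2 < N -> k < N -> (k + N.-1) %% N <> k.+1 %% N.
Proof.
move=> hN hk.
case: k hk => [|k] hk.
- rewrite add0n !modn_small //; [ | lia | lia]. lia.
- have -> : k.+1 + N.-1 = k + N by lia.
  rewrite modnDr (modn_small (m := k)); last by lia.
  case: (ltnP k.+2 N) => h; first by rewrite modn_small //; lia.
  have -> : k.+2 = N by lia.
  rewrite modnn; lia.
Qed.

Section Tour.
Variables (s : seq V) (d : V).
Hypotheses (hu : uniq s) (hN : 2 < size s).
Local Notation N := (size s).
Definition xx k := nth d s (k %% N).

Lemma xx_inj i j : xx i = xx j -> i %% N = j %% N.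
Proof.
move=> h; apply/eqP; rewrite -(nth_uniq d _ _ hu) ?ltn_pmod //; [apply/eqP; exact h| lia|lia].
Qed.
Lemma xx_modE i j : i %% N = j %% N -> xx i = xx j.
Proof. by rewrite /xx => ->. Qed.
Lemma xxN k : xx (k + N) = xx k.
Proof. by rewrite /xx modnDr. Qed.
Lemma xx_prev k : xx (k + N.-1).+1 = xx k.
Proof. have -> : (k + N.-1).+1 = k + N by lia. exact: xxN. Qed.

Definition Pk k := ~~ c12 (xx (k + N.-1)) (xx k) && c12 (xx k) (xx k.+1).

Lemma picked_le (hn : 0 < n) : \sum_(0 <= k < N) Pk k <= max_matching E.
Proof.
set K := [set k : 'I_N | Pk k].
have -> : \sum_(0 <= k < N) Pk k = #|K|.
  rewrite big_mkord -sum1_card [RHS]big_mkcond /=; apply: eq_bigr => k _; rewrite inE.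
  by case: (Pk k).
pose d1 := (Ordinal hn, Ordinal hn).
pose g (k : 'I_N) := odflt d1 (pairOf (xx k) (xx k.+1)).
have gspec : forall k : 'I_N, k \in K -> exists u w, g k = (u, w) /\ E u w /\
    ((xx k = vtx1 u /\ xx k.+1 = vtx2 w) \/ (xx k = vtx2 w /\ xx k.+1 = vtx1 u)).
  move=> k; rewrite inE => /andP[_ /pairOf_spec [u [w [h1 h2]]]]; exists u, w.
  by rewrite /g h1.
have cross : forall i j : 'I_N, i \in K -> j \in K -> xx i <> xx j.+1.
  move=> i j; rewrite !inE => /andP[hi _] /andP[_ hj] hij.
  have e1 : xx (i + N.-1) = xx j.
    apply: xx_modE; rewrite -modnDml (xx_inj hij) modnDml.
    have -> : j.+1 + N.-1 = j + N by lia.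
    by rewrite modnDr.
  by move: hi; rewrite e1 hij hj.
have disj : forall k k' : 'I_N, k \in K -> k' \in K -> forall a,
    (a = xx k \/ a = xx k.+1) -> (a = xx k' \/ a = xx k'.+1) -> k = k'.
  move=> k k' hk hk' a ha ha'; apply: val_inj => /=.
  have hkN := ltn_ord k; have hk'N := ltn_ord k'.
  case: ha ha' => -> [] h.
  - by move/xx_inj: h; rewrite !modn_small.
  - by exfalso; apply: (cross k k').
  - by exfalso; apply: (cross k' k) => //; rewrite h.
  - by move/xx_inj: h; apply: succ_mod_inj.
have ginj : {in K &, injective g}.
  move=> k k' hk hk' hg.
  have [u [w [g1 [_ h1]]]] := gspec k hk.
  have [u' [w' [g2 [_ h2]]]] := gspec k' hk'.
  rewrite g1 g2 in hg; case: hg => e1 e2; subst u' w'.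
  apply: (disj k k' hk hk' (vtx1 u)).
  + by case: h1 => [[-> _]|[_ ->]]; [left|right].
  + by case: h2 => [[-> _]|[_ ->]]; [left|right].
rewrite -(card_in_imset ginj).
apply: leq_bigmax_cond.
apply/andP; split.
- apply/forallP => p; apply/implyP => /imsetP [k hk ->].
  by have [u [w [-> [hE _]]]] := gspec k hk.
- apply/forallP => p; apply/implyP => /imsetP [k hk ->].
  apply/forallP => q; apply/implyP => /imsetP [k' hk' ->]; apply/implyP => h.
  suff -> : k = k' by [].
  have [u [w [g1 [_ h1]]]] := gspec k hk.
  have [u' [w' [g2 [_ h2]]]] := gspec k' hk'.
  rewrite g1 g2 /= in h; case/orP: h => /eqP e1; subst.
  + apply: (disj k k' hk hk' (vtx1 u')).
    * by case: h1 => [[-> _]|[_ ->]]; [left|right].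
    * by case: h2 => [[-> _]|[_ ->]]; [left|right].
  + apply: (disj k k' hk hk' (vtx2 w')).
    * by case: h1 => [[_ ->]|[-> _]]; [right|left].
    * by case: h2 => [[_ ->]|[-> _]]; [right|left].
Qed.
End Tour.

Lemma card_Vp : #|V| = n./2 + n + n + n + n./2.
Proof. by rewrite !card_sum !card_ord. Qed.

Lemma lower (s : seq V) : is_tour s -> 0 < n -> ~~ odd n ->
  5 * n - max_matching E <= tour_cost e s.
Proof.
move=> hs hn hodd.
have hhalf : n./2 + n./2 = n.
  have := odd_double_half n; rewrite (negbTE hodd) add0n -addnn => //.
have hsz : size s = 4 * n.
  rewrite (perm_size hs) -cardE card_Vp; lia.
have hu : uniq s by rewrite (perm_uniq hs) enum_uniq.
have hN : 2 < size s by lia.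
pose d := vtx1 (Ordinal hn).
rewrite (tour_cost_sum _ d); last by lia.
set N := size s.
have -> : forall f : V -> V -> nat,
  \sum_(0 <= k < N) f (nth d s (k %% N)) (nth d s (k.+1 %% N)) =
  \sum_(0 <= k < N) f (xx s d k) (xx s d k.+1) by [].
have hsum : \sum_(0 <= k < N) tsp_dist e (xx s d k) (xx s d k.+1)
    + \sum_(0 <= k < N) e (xx s d k) (xx s d k.+1) = 2 * N.
  rewrite -big_split /=.
  rewrite (eq_big_nat _ _ (F2 := fun _ => 2)) ?sum_nat_const_nat; first by lia.
  by move=> k _; rewrite /tsp_dist; case: (e _ _).
have sh : forall f : V -> V -> nat,
    \sum_(0 <= k < N) f (xx s d k) (xx s d k.+1)
    = \sum_(0 <= k < N) f (xx s d (k + N.-1)) (xx s d k).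
  move=> f.
  rewrite -(@sum_shift (fun k => f (xx s d k) (xx s d k.+1)) N N.-1) => [|k].
  + by apply: eq_big_nat => k _; rewrite xx_prev.
  + by rewrite -addSn !xxN.
have hedge : \sum_(0 <= k < N) e (xx s d k) (xx s d k.+1) =
    \sum_(0 <= k < N) Lloc (xx s d (k + N.-1)) (xx s d k) (xx s d k.+1)
    + \sum_(0 <= k < N) Pk s d k.
  rewrite (eq_big_nat _ _ (fun k _ => edge_decomp _ _)) !big_split /=.
  rewrite (eq_big_nat _ _ (fun k _ => c01_split _ _)) big_split /=.
  rewrite (eq_big_nat _ _ (fun k _ => c23_split _ _)) big_split /=.
  rewrite (eq_big_nat _ _ (fun k _ => c34_split _ _)) big_split /=.
  rewrite (sh (fun a b => isV1 b && c01 a b)) (sh (fun a b => isV2 b && c23 a b))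
          (sh (fun a b => isV4 b && c34 a b)) /=.
  have -> : \sum_(0 <= k < N) c12 (xx s d k) (xx s d k.+1) =
     \sum_(0 <= k < N) (c12 (xx s d (k + N.-1)) (xx s d k) && c12 (xx s d k) (xx s d k.+1))
     + \sum_(0 <= k < N) Pk s d k.
    rewrite -big_split /=; apply: eq_big_nat => k _; rewrite /Pk.
    by case: (c12 _ _); case: (c12 _ _).
  rewrite /Lloc; lia.
have hL : \sum_(0 <= k < N) Lloc (xx s d (k + N.-1)) (xx s d k) (xx s d k.+1)
   <= \sum_(0 <= k < N) (isV1 (xx s d k) + isV2 (xx s d k) + 2 * isV4 (xx s d k)).
  rewrite big_nat_cond [X in _ <= X]big_nat_cond; apply: leq_sum => k /andP[/andP[_ hk] _].
  apply: Lloc_le => /xx_inj h.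
  by apply: (prev_next_neq hN hk); apply: h.
have h3n : \sum_(0 <= k < N) (isV1 (xx s d k) + isV2 (xx s d k) + 2 * isV4 (xx s d k)) = 3 * n.
  rewrite (eq_big_nat _ _ (F2 := fun k => (fun v => isV1 v + isV2 v + 2 * isV4 v) (nth d s k))); last first.
    by move=> k /andP[_ hk]; rewrite /xx modn_small.
  transitivity (\sum_(v : V) (isV1 v + isV2 v + 2 * isV4 v)); first exact: (@sum_perm _ s d (fun v => isV1 v + isV2 v + 2 * isV4 v) hs).
  rewrite !big_sumType /=.
  rewrite !sum_nat_const !card_ord; lia.
have hP : \sum_(0 <= k < N) Pk s d k <= max_matching E := picked_le d hu hN hn.
have hN4 : N = 4 * n by [].
move: hN4 hP hsum hedge hL h3n; clearbody N.
lia.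
Qed.
End G.


Section Up.
Variables (n : nat) (E : 'I_n -> 'I_n -> bool) (M : {set 'I_n * 'I_n}).
Hypotheses (hM : is_bmatching E M) (hn : 0 < n) (hodd : ~~ odd n).
Local Notation V := (Vp n).
Local Notation e := (Gp_edge E).

Local Notation m := (n./2).
Lemma hm : n = 2 * m.
Proof. have := odd_double_half n; rewrite (negbTE hodd) add0n -muln2; lia. Qed.
Lemma hm0 : 0 < n./2.
Proof. have := hm; lia. Qed.

Let d1 : 'I_n := Ordinal hn.
Let d0 : 'I_(n./2) := Ordinal hm0.
Definition o1 k : 'I_n := insubd d1 k.
Definition o0 k : 'I_(n./2) := insubd d0 k.
Lemma o1E k : k < n -> val (o1 k) = k.
Proof. by rewrite val_insubd => ->. Qed.
Lemma o0E k : k < n./2 -> val (o0 k) = k.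
Proof. by rewrite val_insubd => ->. Qed.
Lemma o1_val (u : 'I_n) : o1 u = u.
Proof. by apply: val_inj; rewrite o1E. Qed.
Lemma o0_val (u : 'I_(n./2)) : o0 u = u.
Proof. by apply: val_inj; rewrite o0E. Qed.

Lemma hME p : p \in M -> E p.1 p.2.
Proof. by case/andP: hM => /forallP /(_ p) /implyP h _. Qed.
Lemma hMu p q : p \in M -> q \in M -> (p.1 == q.1) || (p.2 == q.2) -> p = q.
Proof.
move=> hp hq h0; case/andP: hM => _ /forallP /(_ p) /implyP /(_ hp) /forallP /(_ q) /implyP /(_ hq) /implyP /(_ h0) /eqP //.
Qed.

Definition S1 := [set p.1 | p in M].
Definition S2 := [set p.2 | p in M].
Definition partner u := odflt d1 (omap snd [pick p in M | p.1 == u]).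
Lemma partnerE p : p \in M -> partner p.1 = p.2.
Proof.
move=> hp; rewrite /partner; case: pickP => [q /andP[hq /eqP h]|/(_ p)].
- by rewrite /= (hMu hq hp) // h eqxx.
- by rewrite hp eqxx.
Qed.

Lemma cardS1 : #|S1| = #|M|.
Proof. apply: card_in_imset => p q hp hq h; apply: hMu => //; by rewrite h eqxx. Qed.
Lemma cardS2 : #|S2| = #|M|.
Proof. apply: card_in_imset => p q hp hq h; apply: hMu => //; by rewrite h eqxx orbT. Qed.

Definition tau u := nth d1 (enum (~: S2)) (index u (enum (~: S1))).
Lemma cardAB : #|~: S1| = #|~: S2|.
Proof. have h1 := cardsC S1; have h2 := cardsC S2. rewrite cardS1 in h1; rewrite cardS2 in h2. lia. Qed.

Lemma tauB u : u \notin S1 -> tau u \notin S2.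
Proof.
move=> hu; have : tau u \in enum (~: S2).
  apply: mem_nth; rewrite -cardE -cardAB cardE index_mem mem_enum inE //.
by rewrite mem_enum inE.
Qed.

Lemma tau_inj u u' : u \notin S1 -> u' \notin S1 -> tau u = tau u' -> u = u'.
Proof.
move=> hu hu' /eqP; rewrite /tau nth_uniq ?enum_uniq //; last first.
- by rewrite -cardE -cardAB cardE index_mem mem_enum inE.
- by rewrite -cardE -cardAB cardE index_mem mem_enum inE.
move/eqP=> h; have := congr1 (nth d1 (enum (~: S1))) h.
by rewrite !nth_index // mem_enum inE.
Qed.

Definition sigma u := if u \in S1 then partner u else tau u.

Lemma sigma_inj : injective sigma.
Proof.
move=> u u'; rewrite /sigma.
case: (boolP (u \in S1)) => [/imsetP[p hp ->]|hu];
  case: (boolP (u' \in S1)) => [/imsetP[q hq ->]|hu'].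
- rewrite !partnerE // => h; by rewrite (hMu hp hq) // h eqxx orbT.
- rewrite partnerE // => h; have := tauB hu'; rewrite -h.
  by move/negP; case; apply/imsetP; exists p.
- rewrite partnerE // => h; have := tauB hu; rewrite h.
  by move/negP; case; apply/imsetP; exists q.
- exact: tau_inj.
Qed.

Lemma sigmaE u : u \in S1 -> E u (sigma u).
Proof. by move=> /imsetP[p hp ->]; rewrite /sigma (imset_f _ hp) partnerE //; apply: hME. Qed.


Definition blk (i r : nat) : V :=
  match r with
  | 0 => vtx1 (o1 (2 * i))
  | 1 => vtx0 (o0 i)
  | 2 => vtx1 (o1 (2 * i + 1))
  | 3 => vtx2 (sigma (o1 (2 * i + 1)))
  | 4 => vtx3 (sigma (o1 (2 * i + 1)))
  | 5 => vtx4 (o0 i)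
  | 6 => vtx3 (sigma (o1 ((2 * i + 2) %% n)))
  | _ => vtx2 (sigma (o1 ((2 * i + 2) %% n)))
  end.

Definition pos k := blk (k %/ 8) (k %% 8).

Lemma posE i r : r < 8 -> pos (8 * i + r) = blk i r.
Proof. move=> hr; rewrite /pos; congr blk; lia. Qed.


Lemma surj v : exists2 k, k < 8 * m & pos k = v.
Proof.
have hnm := hm.
case: v => [[[[i|u]|w]|w]|i].
- exists (8 * i + 1); first by have := ltn_ord i; lia.
  by rewrite posE //= o0_val.
- have hu := ltn_ord u.
  have [h2|h2] : u %% 2 = 0 \/ u %% 2 = 1 by lia.
  + exists (8 * (u %/ 2) + 0); first by lia.
    rewrite posE //=; congr vtx1; apply: val_inj => /=; rewrite o1E; lia.
  + exists (8 * (u %/ 2) + 2); first by lia.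
    rewrite posE //=; congr vtx1; apply: val_inj => /=; rewrite o1E; lia.
- have [sinv hs1 hs2] := injF_bij sigma_inj.
  have [u <-] : exists u, sigma u = w by exists (sinv w).
  have hu := ltn_ord u.
  have [h2|h2] : u %% 2 = 0 \/ u %% 2 = 1 by lia.
  + have [j0|jpos] : u %/ 2 = 0 \/ 0 < u %/ 2 by lia.
    * exists (8 * (m.-1) + 7); first by lia.
      rewrite posE //=; congr vtx2; congr sigma; apply: val_inj => /=.
      have -> : 2 * m.-1 + 2 = n by lia.
      rewrite modnn o1E; lia.
    * exists (8 * (u %/ 2).-1 + 7); first by lia.
      rewrite posE //=; congr vtx2; congr sigma; apply: val_inj => /=.
      rewrite modn_small; last by lia.
      rewrite o1E; lia.
  + exists (8 * (u %/ 2) + 3); first by lia.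
    rewrite posE //=; congr vtx2; congr sigma; apply: val_inj => /=.
    rewrite o1E; lia.
- have [sinv hs1 hs2] := injF_bij sigma_inj.
  have [u <-] : exists u, sigma u = w by exists (sinv w).
  have hu := ltn_ord u.
  have [h2|h2] : u %% 2 = 0 \/ u %% 2 = 1 by lia.
  + have [j0|jpos] : u %/ 2 = 0 \/ 0 < u %/ 2 by lia.
    * exists (8 * (m.-1) + 6); first by lia.
      rewrite posE //=; congr vtx3; congr sigma; apply: val_inj => /=.
      have -> : 2 * m.-1 + 2 = n by lia.
      rewrite modnn o1E; lia.
    * exists (8 * (u %/ 2).-1 + 6); first by lia.
      rewrite posE //=; congr vtx3; congr sigma; apply: val_inj => /=.
      rewrite modn_small; last by lia.
      rewrite o1E; lia.
  + exists (8 * (u %/ 2) + 4); first by lia.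
    rewrite posE //=; congr vtx3; congr sigma; apply: val_inj => /=.
    rewrite o1E; lia.
- exists (8 * i + 5); first by have := ltn_ord i; lia.
  by rewrite posE //= o0_val.
Qed.

Definition s0 := mkseq pos (8 * m).

Lemma tour0 : is_tour s0.
Proof.
have hsz : size s0 = 8 * m by rewrite size_mkseq.
have hV : #|V| = 8 * m by rewrite card_Vp; have := hm; lia.
have hin : forall v, v \in s0.
  move=> v; have [k hk <-] := surj v; rewrite /s0 /mkseq; apply: map_f; rewrite mem_iota; lia.
have hu : uniq s0.
  apply: (leq_size_uniq (enum_uniq V)) => [v _|]; first exact: hin.
  by rewrite hsz -cardE hV.
apply: uniq_perm => // [|v]; first exact: enum_uniq.
by rewrite hin mem_enum.
Qed.

Lemma nextE i r : i < m -> r < 7 -> pos ((8 * i + r).+1 %% (8 * m)) = blk i r.+1.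
Proof.
move=> hi hr; rewrite modn_small; last by lia.
rewrite -addnS posE //.
Qed.

Lemma next7 i : i < m -> pos ((8 * i + 7).+1 %% (8 * m)) = vtx1 (o1 ((2 * i + 2) %% n)).
Proof.
move=> hi; have hnm := hm.
case: (ltnP i.+1 m) => h.
- rewrite modn_small; last by lia.
  have -> : (8 * i + 7).+1 = 8 * i.+1 + 0 by lia.
  rewrite posE //= modn_small; last by lia.
  by congr (vtx1 (o1 _)); lia.
- have -> : (8 * i + 7).+1 = 8 * m by lia.
  have -> : 2 * i + 2 = n by lia.
  by rewrite !modnn.
Qed.

Definition hh k : nat := o1 k \in S1.

Lemma block i : i < m ->
  6 + hh (2 * i + 1) + hh ((2 * i + 2) %% n) <=
  \sum_(0 <= r < 8) e (pos (8 * i + r)) (pos ((8 * i + r).+1 %% (8 * m))).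
Proof.
move=> hi; have hnm := hm.
rewrite !big_nat_recl // big_geq //.
rewrite next7 // !posE // !nextE //=.
have h1 : 2 * i < n by lia.
have h2 : 2 * i + 1 < n by lia.
have hi' : i < n./2 by [].
have e12 : forall u, (u \in S1 : nat) <= e (vtx1 u) (vtx2 (sigma u)).
  move=> u; rewrite /Gp_edge /=; case: (boolP (u \in S1)) => // /sigmaE ->; by [].
have e21 : forall u, (u \in S1 : nat) <= e (vtx2 (sigma u)) (vtx1 u).
  move=> u; rewrite /Gp_edge /=; case: (boolP (u \in S1)) => // /sigmaE ->; by [].
have := e12 (o1 (2 * i + 1)); have := e21 (o1 ((2 * i + 2) %% n)).
rewrite /hh /Gp_edge /= !eqxx /= !o1E // !o0E //.
have -> : (2 * i == i.*2) by apply/eqP; lia.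
have -> : (2 * i + 1 == i.*2.+1) by apply/eqP; lia.
rewrite !orbT /=.
lia.
Qed.

Lemma sum_hh : \sum_(0 <= i < m) (hh (2 * i + 1) + hh ((2 * i + 2) %% n)) = #|M|.
Proof.
have hnm := hm.
rewrite big_split /=.
have -> : \sum_(0 <= i < m) hh ((2 * i + 2) %% n) = \sum_(0 <= i < m) hh (2 * i).
  transitivity (\sum_(0 <= i < m) hh ((2 * (i + 1)) %% n)).
    by apply: eq_big_nat => i _ /=; rewrite mulnDr muln1.
  transitivity (\sum_(0 <= i < m) hh ((2 * i) %% n)).
    apply: (@sum_shift (fun j => hh ((2 * j) %% n)) m 1) => k /=.
    by rewrite mulnDr -hnm modnDr.
  by apply: eq_big_nat => i /andP[_ hi]; rewrite modn_small //; lia.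
rewrite addnC -big_split /= -sum_pairs -hnm big_mkord.
rewrite -cardS1 -sum1_card [RHS]big_mkcond /=.
by apply: eq_bigr => u _; rewrite /hh o1_val; case: (u \in S1).
Qed.

Lemma cost0 : tour_cost e s0 <= 5 * n - #|M|.
Proof.
have hnm := hm.
have hsz : size s0 = 8 * m by rewrite size_mkseq.
rewrite (tour_cost_sum _ (pos 0)); last by rewrite hsz; lia.
rewrite hsz.
have -> : \sum_(0 <= k < 8 * m) tsp_dist e (nth (pos 0) s0 (k %% (8 * m))) (nth (pos 0) s0 (k.+1 %% (8 * m)))
  = \sum_(0 <= k < 8 * m) tsp_dist e (pos k) (pos (k.+1 %% (8 * m))).
  apply: eq_big_nat => k /andP[_ hk].
  rewrite !nth_mkseq ?ltn_pmod //; try lia.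
  by rewrite modn_small.
have hsum : \sum_(0 <= k < 8 * m) tsp_dist e (pos k) (pos (k.+1 %% (8 * m)))
    + \sum_(0 <= k < 8 * m) e (pos k) (pos (k.+1 %% (8 * m))) = 2 * (8 * m).
  rewrite -big_split /=.
  rewrite (eq_big_nat _ _ (F2 := fun _ => 2)) ?sum_nat_const_nat; first by lia.
  by move=> k _; rewrite /tsp_dist; case: (e _ _).
have hE : 6 * m + #|M| <= \sum_(0 <= k < 8 * m) e (pos k) (pos (k.+1 %% (8 * m))).
  rewrite sum_blocks -sum_hh.
  have -> : 6 * m = \sum_(0 <= i < m) 6 by rewrite sum_nat_const_nat subn0 mulnC.
  rewrite -big_split /= big_nat_cond [X in _ <= X]big_nat_cond.
  apply: leq_sum => i /andP[/andP[_ hi] _].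
  by rewrite addnA; apply: block.
lia.
Qed.
End Up.

Lemma upper n (E : 'I_n -> 'I_n -> bool) (M : {set 'I_n * 'I_n}) :
  is_bmatching E M -> 0 < n -> ~~ odd n ->
  exists2 s, is_tour s & tour_cost (Gp_edge E) s <= 5 * n - #|M|.
Proof.
move=> hM hn hodd; exists (s0 hM hn hodd); [exact: tour0 | exact: cost0].
Qed.

Theorem mainTheorem19 (n : nat) (E : 'I_n -> 'I_n -> bool) :
  ~~ odd n ->
  (forall M : {set 'I_n * 'I_n}, is_bmatching E M ->
     exists2 s : seq (Vp n), is_tour s &
       tour_cost (Gp_edge E) s <= 5 * n - #|M|)
  /\ (forall s : seq (Vp n), is_tour s ->
       5 * n - max_matching E <= tour_cost (Gp_edge E) s)
  /\ is_opt_tsp_cost (Gp_edge E) (5 * n - max_matching E).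
Proof.
move=> hodd.
case: (posnP n) => [hn0|hn].
- subst n.
  have ht : is_tour ([::] : seq (Vp 0)).
    rewrite /is_tour (size0nil (s := enum (Vp 0))) //.
    by rewrite -cardE card_Vp.
  split; [|split].
  + by move=> M _; exists [::].
  + by move=> s _; rewrite muln0 sub0n.
  + split; first by exists [::].
    by move=> s _; rewrite muln0 sub0n.
- have hlow : forall s : seq (Vp n), is_tour s -> 5 * n - max_matching E <= tour_cost (Gp_edge E) s.
    by move=> s hs; apply: lower.
  split; [|split].
  + by move=> M hM; apply: upper.
  + exact: hlow.
  + split; last exact: hlow.
    have hpos : 0 < #|[pred M : {set 'I_n * 'I_n} | is_bmatching E M]|.
      apply/card_gt0P; exists set0; rewrite inE.
      by apply/andP; split; apply/forallP => p; rewrite in_set0.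
    have [M0 hM0 eqM] := @eq_bigmax_cond _ [pred M : {set 'I_n * 'I_n} | is_bmatching E M] (fun M => #|M|) hpos.
    rewrite inE in hM0.
    have [s hs hc] := upper hM0 hn hodd.
    exists s => //; apply/eqP; rewrite eqn_leq hlow // andbT.
    rewrite /max_matching.
    have -> : \max_(M | is_bmatching E M) #|M| = #|M0| by rewrite -eqM.
    exact: hc.
Qed.
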